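(* Let $\Lambda$ be a left cancellative small category and $v\in\Lambda^0$. Then (a) every maximal filter in $\mathcal D^{(0)}_v$ belongs to $v\Lambda^*$; (b) every totally ordered (by inclusion) subset of $v\Lambda^*$ has an upper bound in $v\Lambda^*$ (so Zorn's lemma applies to $v\Lambda^*$); and (c) every maximal element of $v\Lambda^*$ (with respect to inclusion) is a maximal filter in $\mathcal D^{(0)}_v$.
   Context: A left cancellative small category (LCSC) is a small category $\Lambda$ such that $\alpha\beta=\alpha\gamma$ implies $\beta=\gamma$. Composition $\alpha\beta$ is defined when $s(\alpha)=r(\beta)$; $\Lambda^0$ is the set of objects; $v\Lambda=\{\alpha:r(\alpha)=v\}$. For $\alpha\in\Lambda$, $\tau^\alpha(\beta)=\alpha\beta$ on $s(\alpha)\Lambda$ and $\sigma^\alpha:\alpha\Lambda\to s(\alpha)\Lambda$ is its inverse. A zigzag is a tuple $\zeta=(\alpha_1,\beta_1,\dots,\alpha_n,\beta_n)$ with $r(\alpha_i)=r(\beta_i)$ and $s(\alpha_{i+1})=s(\beta_i)$, $s(\zeta)=s(\beta_n)$; the zigzag map $\varphi_\zeta=\sigma^{\alpha_1}\circ\tau^{\beta_1}\circ\cdots\circ\sigma^{\alpha_n}\circ\tau^{\beta_n}$ (partial map) has domain $A(\zeta)\subseteq s(\zeta)\Lambda$. $\mathcal D^{(0)}_v$ is the set of nonempty $A(\zeta)$ with $s(\zeta)=v$ (closed under nonempty intersection). A filter in $\mathcal D^{(0)}_v$ is a nonempty $C\subseteq\mathcal D^{(0)}_v$ closed under intersection and under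 supersets within $\mathcal D^{(0)}_v$ (so its members are nonempty). A finite $\mathcal F\subseteq\mathcal D^{(0)}_v$ covers the filter $C$ if some $E\in C$ satisfies $E\subseteq\bigcup\mathcal F$. $v\Lambda^*$ is the set of filters $C$ in $\mathcal D^{(0)}_v$ such that every finite $\mathcal F\subseteq\mathcal D^{(0)}_v$ with $\mathcal F\cap C=\varnothing$ does not cover $C$. *)

(* Defs.v *)
From Stdlib Require Import List.
Import ListNotations.

(* A small category; composition is a total function on morphisms whose
   value is only meaningful (and only constrained) on composable pairs,
   i.e. when [src a = rng b].  [comp a b] is "a b" (a after b). *)
Record Cat := {
  Obj : Type;
  Mor : Type;
  rng : Mor -> Obj;
  src : Mor -> Obj;
  comp : Mor -> Mor -> Mor;
  idm : Obj -> Mor;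
  rng_idm : forall v, rng (idm v) = v;
  src_idm : forall v, src (idm v) = v;
  rng_comp : forall a b, src a = rng b -> rng (comp a b) = rng a;
  src_comp : forall a b, src a = rng b -> src (comp a b) = src b;
  comp_assoc : forall a b c, src a = rng b -> src b = rng c ->
      comp (comp a b) c = comp a (comp b c);
  comp_idl : forall a, comp (idm (rng a)) a = a;
  comp_idr : forall a, comp a (idm (src a)) = a
}.

Arguments rng {c0} _.
Arguments src {c0} _.
Arguments comp {c0} _ _.
Arguments idm {c0} _.

Definition left_cancellative (L : Cat) : Prop :=
  forall a b c : Mor L, src a = rng b -> src a = rng c ->
    comp a b = comp a c -> b = c.

(* Graph of the partial map sigma^a o tau^b:
   x in s(b)Lambda  |->  the z in s(a)Lambda with a z = b x. *)
Definition pair_rel {L : Cat} (a b : Mor L) (x z : Mor L) : Prop :=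
  rng x = src b /\ rng z = src a /\ comp a z = comp b x.

(* Graph of the zigzag map of zeta = [(a1,b1); ...; (an,bn)]:
   phi = sigma^{a1} o tau^{b1} o ... o sigma^{an} o tau^{bn}. *)
Fixpoint zz_rel {L : Cat} (l : list (Mor L * Mor L)) : Mor L -> Mor L -> Prop :=
  match l with
  | [] => fun x y => x = y
  | (a, b) :: l' => fun x y => exists z, zz_rel l' x z /\ pair_rel a b z y
  end.

Fixpoint is_zigzag_from {L : Cat} (l : list (Mor L * Mor L)) (v : Obj L) : Prop :=
  match l with
  | [] => False
  | [(a, b)] => rng a = rng b /\ src b = v
  | (a, b) :: (((a', b') :: _) as l') =>
      rng a = rng b /\ src a' = src b /\ is_zigzag_from l' v
  end.

Definition zz_dom {L : Cat} (l : list (Mor L * Mor L)) : Mor L -> Prop :=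
  fun x => exists y, zz_rel l x y.

Definition set_incl {X : Type} (E F : X -> Prop) : Prop := forall x, E x -> F x.

Definition D0 {L : Cat} (v : Obj L) (E : Mor L -> Prop) : Prop :=
  (exists l, is_zigzag_from l v /\ forall x, E x <-> zz_dom l x) /\
  (exists x, E x).

Definition is_filter {L : Cat} (v : Obj L) (C : (Mor L -> Prop) -> Prop) : Prop :=
  (exists E, C E) /\
  (forall E, C E -> D0 v E) /\
  (forall E F, C E -> C F -> C (fun x => E x /\ F x)) /\
  (forall E F, C E -> D0 v F -> set_incl E F -> C F).

Definition fam_incl {L : Cat} (C C' : (Mor L -> Prop) -> Prop) : Prop :=
  forall E, C E -> C' E.

Definition maximal_filter {L : Cat} (v : Obj L) (C : (Mor L -> Prop) -> Prop) : Prop :=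
  is_filter v C /\
  forall C', is_filter v C' -> fam_incl C C' -> fam_incl C' C.

Definition covers {L : Cat} (F : list (Mor L -> Prop)) (C : (Mor L -> Prop) -> Prop) : Prop :=
  exists E, C E /\ forall x, E x -> exists G, In G F /\ G x.

Definition in_star {L : Cat} (v : Obj L) (C : (Mor L -> Prop) -> Prop) : Prop :=
  is_filter v C /\
  forall F : list (Mor L -> Prop),
    (forall G, In G F -> D0 v G) ->
    (forall G, In G F -> ~ C G) ->
    ~ covers F C.

Definition maximal_in_star {L : Cat} (v : Obj L) (C : (Mor L -> Prop) -> Prop) : Prop :=
  in_star v C /\
  forall C', in_star v C' -> fam_incl C C' -> fam_incl C' C.

(* Main.v *)
Require Import Defs.
From Stdlib Require Import List.
From Stdlib Require Import Classical.
From mathcomp Require ssrbool boolp classical_sets.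

Section Aux.
Variable L : Cat.
Variable HL : left_cancellative L.

Fixpoint ok (l : list (Mor L * Mor L)) (u w : Obj L) : Prop :=
  match l with
  | nil => u = w
  | (a, b) :: l' => rng a = rng b /\ src a = u /\ ok l' (src b) w
  end.

Fixpoint rs (l : list (Mor L * Mor L)) : list (Mor L * Mor L) :=
  match l with
  | nil => nil
  | (a, b) :: l' => rs l' ++ ((b, a) :: nil)
  end.

Lemma ok_app p q u t w : ok p u t -> ok q t w -> ok (p ++ q) u w.
Proof.
  revert u; induction p as [|[a b] p IH]; simpl; intros u H1 H2.
  - subst; auto.
  - destruct H1 as [? [? ?]]; repeat split; auto.
Qed.

Lemma ok_rs l u w : ok l u w -> ok (rs l) w u.
Proof.
  revert u; induction l as [|[a b] l IH]; simpl; intros u H.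
  - auto.
  - destruct H as [? [? ?]]. apply ok_app with (src b); auto.
    simpl; repeat split; auto.
Qed.

Lemma zz_app p q (x y : Mor L) :
  zz_rel (p ++ q) x y <-> exists z, zz_rel q x z /\ zz_rel p z y.
Proof.
  revert y; induction p as [|[a b] p IH]; simpl; intros y; split.
  - intros H; exists y; auto.
  - intros [z [H1 H2]]; subst; auto.
  - intros [z [H1 H2]]. apply IH in H1. destruct H1 as [z' [H3 H4]].
    exists z'; split; auto. exists z; auto.
  - intros [z' [H3 [z [H4 H5]]]]. exists z; split; auto. apply IH; eauto.
Qed.

Lemma pair_sym (a b x z : Mor L) : pair_rel a b x z -> pair_rel b a z x.
Proof. unfold pair_rel; intros [? [? ?]]; auto. Qed.

Lemma zz_rs l (x y : Mor L) : zz_rel l x y -> zz_rel (rs l) y x.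
Proof.
  revert y; induction l as [|[a b] l IH]; simpl; intros y H.
  - auto.
  - destruct H as [z [H1 H2]]. apply zz_app. exists z; split.
    + simpl. exists y; split; auto. apply pair_sym; auto.
    + apply IH; auto.
Qed.

Lemma zz_rs' l (x y : Mor L) : zz_rel (rs l) y x -> zz_rel l x y.
Proof.
  revert y; induction l as [|[a b] l IH]; simpl; intros y H.
  - auto.
  - apply zz_app in H. destruct H as [z [H1 H2]].
    simpl in H1. destruct H1 as [z' [H3 H4]]. subst z'.
    exists z; split; auto. apply pair_sym; auto.
Qed.

Lemma zz_inj l (x w y : Mor L) : zz_rel l x y -> zz_rel l w y -> x = w.
Proof.
  revert y; induction l as [|[a b] l IH]; simpl; intros y H1 H2.
  - congruence.
  - destruct H1 as [z [H1 [P1 [P2 P3]]]]. destruct H2 as [z' [H2 [Q1 [Q2 Q3]]]].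
    assert (z = z').
    { apply (HL b); try congruence. }
    subst z'. eauto.
Qed.

Lemma izf_ok l (v : Obj L) : is_zigzag_from l v -> exists u, ok l u v.
Proof.
  induction l as [|[a b] l IH]; simpl; intros H.
  - contradiction.
  - destruct l as [|[a' b'] l''].
    + destruct H as [H1 H2]. exists (src a). simpl. repeat split; auto.
    + destruct H as [H1 [H2 H3]]. destruct (IH H3) as [u Hu].
      exists (src a). split; auto. split; auto.
      simpl in Hu |- *. destruct Hu as [? [? ?]]. repeat split; auto; congruence.
Qed.

Lemma ok_izf l : forall u v, l <> nil -> ok l u v -> is_zigzag_from l v.
Proof.
  induction l as [|[a b] l IH]; simpl; intros u v Hn H.
  - congruence.
  - destruct H as [H1 [H2 H3]]. destruct l as [|[a' b'] l''].
    + simpl in H3. split; auto.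
    + split; auto. simpl in H3. destruct H3 as [? [? ?]]. split; [congruence|].
      apply (IH (src b)). discriminate. simpl. auto.
Qed.

Lemma D0_inter v (E F : Mor L -> Prop) :
  D0 v E -> D0 v F -> (exists x, E x /\ F x) -> D0 v (fun x => E x /\ F x).
Proof.
  intros [[l [Hl HE]] _] [[l' [Hl' HF]] _] Hne. split; auto.
  exists (l' ++ rs l ++ l). split.
  - destruct (izf_ok l v Hl) as [u Hu]. destruct (izf_ok l' v Hl') as [u' Hu'].
    apply (ok_izf _ u'). { destruct l'; simpl in Hl'; [contradiction|discriminate]. }
    apply ok_app with v; auto. apply ok_app with u; auto. apply ok_rs; auto.
  - intros x. rewrite HE, HF. unfold zz_dom. split.
    + intros [[y Hy] [u Hu]]. exists u. apply zz_app. exists x. split; auto.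
      apply zz_app. exists y. split; auto. apply zz_rs; auto.
    + intros [u Hu]. apply zz_app in Hu. destruct Hu as [w [Hw Hu]].
      apply zz_app in Hw. destruct Hw as [y [Hy Hw]].
      apply zz_rs' in Hw. assert (w = x) by (symmetry; eapply zz_inj; eauto). subst w.
      split; eauto.
Qed.

End Aux.

Section Main.
Variable L : Cat.
Variable HL : left_cancellative L.
Variable v : Obj L.

Lemma max_sep (C : (Mor L -> Prop) -> Prop) (G : Mor L -> Prop) :
  maximal_filter v C -> ~ C G -> D0 v G ->
  exists E, C E /\ forall x, E x -> ~ G x.
Proof.
  intros [[Hne [HD [HI HS]]] Hmax] HnG HDG.
  apply NNPP; intro Hno.
  assert (Hm : forall E, C E -> exists x, E x /\ G x).
  { intros E HE. apply NNPP; intro H1. apply Hno. exists E; split; auto.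
    intros x Ex Gx. apply H1; eauto. }
  set (C' := fun K : Mor L -> Prop => D0 v K /\ exists E, C E /\ forall x, E x /\ G x -> K x).
  assert (HF : is_filter v C').
  { split; [|split; [|split]].
    - destruct Hne as [E0 HE0]. exists G. split; auto. exists E0; split; auto. tauto.
    - intros E [H _]; auto.
    - intros K1 K2 [HD1 [E1 [HE1 H1]]] [HD2 [E2 [HE2 H2]]].
      assert (HE12 := HI _ _ HE1 HE2).
      split.
      + apply (D0_inter L HL); auto. destruct (Hm _ HE12) as [x [[? ?] ?]].
        exists x; split; [apply H1|apply H2]; auto.
      + exists (fun x => E1 x /\ E2 x); split; auto.
        intros x [[? ?] ?]; split; [apply H1|apply H2]; auto.
    - intros K K' [HDK [E [HE H]]] HDK' Hsub. split; auto. exists E; split; auto.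
      }
  assert (HCC : fam_incl C C').
  { intros E HE. split; auto. exists E; split; auto. tauto. }
  apply HnG. apply (Hmax C' HF HCC). split; auto.
  destruct Hne as [E0 HE0]. exists E0; split; auto. tauto.
Qed.

Lemma partA C : maximal_filter v C -> in_star v C.
Proof.
  intros HM. split; [apply HM|].
  destruct HM as [[Hne [HD [HI HS]]] Hmax] eqn:HMe.
  intros F. induction F as [|G F IH]; intros HDF HnF [E [HE Hcov]].
  - destruct (HD E HE) as [_ [x Hx]]. destruct (Hcov x Hx) as [G [[] _]].
  - destruct (max_sep C G HM) as [EG [HEG HEGn]].
    { apply HnF; simpl; auto. }
    { apply HDF; simpl; auto. }
    apply IH.
    + intros G' HG'; apply HDF; simpl; auto.
    + intros G' HG'; apply HnF; simpl; auto.
    + exists (fun x => E x /\ EG x); split; auto.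
      intros x [Ex EGx]. destruct (Hcov x Ex) as [G' [[HG'|HG'] G'x]].
      * subst G'. exfalso; eapply HEGn; eauto.
      * eauto.
Qed.

Definition princ : (Mor L -> Prop) -> Prop := fun E => D0 v E /\ E (idm v).

Lemma princ_star : in_star v princ.
Proof.
  split; [split; [|split; [|split]]|].
  - exists (zz_dom ((idm v, idm v) :: nil)). split.
    + split.
      * exists ((idm v, idm v) :: nil). split; [|tauto]. simpl.
        rewrite rng_idm, src_idm. auto.
      * exists (idm v). exists (idm v). simpl. exists (idm v). split; auto.
        unfold pair_rel. rewrite rng_idm, src_idm. auto.
    + exists (idm v). simpl. exists (idm v). split; auto.
      unfold pair_rel. rewrite rng_idm, src_idm. auto.
  - intros E [H _]; auto.
  - intros E F [HE1 HE2] [HF1 HF2]. split; auto.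
    apply (D0_inter L HL); eauto.
  - intros E F [HE1 HE2] HDF Hs; split; auto.
  - intros F HDF HnF [E [[HDE HEi] Hcov]].
    destruct (Hcov _ HEi) as [G [HG Gi]]. apply (HnF G HG). split; auto.
Qed.

Lemma partB (S : ((Mor L -> Prop) -> Prop) -> Prop) :
  (forall C, S C -> in_star v C) ->
  (forall C1 C2, S C1 -> S C2 -> fam_incl C1 C2 \/ fam_incl C2 C1) ->
  exists U, in_star v U /\ forall C, S C -> fam_incl C U.
Proof.
  intros HSs Htot.
  destruct (classic (exists C, S C)) as [[C0 HC0]|Hn].
  - set (U := fun E => exists C, S C /\ C E).
    exists U. split.
    + split; [split; [|split; [|split]]|].
      * destruct (HSs C0 HC0) as [[[E HE] _] _]. exists E, C0; auto.
      * intros E [C [HC HE]]. destruct (HSs C HC) as [[_ [HD _]] _]. auto.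
      * intros E F [C1 [HC1 HE]] [C2 [HC2 HF]].
        destruct (Htot C1 C2 HC1 HC2) as [H|H].
        -- exists C2; split; auto. destruct (HSs C2 HC2) as [[_ [_ [HI _]]] _]. auto.
        -- exists C1; split; auto. destruct (HSs C1 HC1) as [[_ [_ [HI _]]] _]. auto.
      * intros E F [C [HC HE]] HDF Hs. exists C; split; auto.
        destruct (HSs C HC) as [[_ [_ [_ HSu]]] _]. eauto.
      * intros F HDF HnF [E [[C [HC HE]] Hcov]].
        destruct (HSs C HC) as [_ Hst]. apply (Hst F HDF).
        -- intros G HG HCG. apply (HnF G HG). exists C; auto.
        -- exists E; auto.
    + intros C HC E HE. exists C; auto.
  - exists princ. split; [apply princ_star|].
    intros C HC. exfalso; eauto.
Qed.

Lemma extend_max (C' : (Mor L -> Prop) -> Prop) :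
  is_filter v C' -> exists M, maximal_filter v M /\ fam_incl C' M.
Proof.
  intros HC'.
  set (T := { M : (Mor L -> Prop) -> Prop | is_filter v M /\ fam_incl C' M }).
  set (R := fun a b : T => boolp.asbool (fam_incl (proj1_sig a) (proj1_sig b))).
  assert (HR : forall a b : T, is_true (R a b) <-> fam_incl (proj1_sig a) (proj1_sig b)).
  { intros a b. unfold R. split; intro H; [apply (ssrbool.elimT (boolp.asboolP _)) | apply (ssrbool.introT (boolp.asboolP _))]; auto. }
  assert (t0 : T).
  { exists C'. split; auto. intros E H; auto. }
  destruct (classical_sets.ZL_preorder t0 (R := R)) as [t Ht].
  - intros a; apply HR; intros E H; auto.
  - intros a b c H1 H2. apply HR. apply HR in H1. apply HR in H2. intros E H; auto.
  - intros A HA.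
    set (U := fun E => C' E \/ exists s : T, A s /\ proj1_sig s E).
    assert (HU : is_filter v U /\ fam_incl C' U).
    { destruct HC' as [Hne [HD [HI HS]]].
      split; [split; [|split; [|split]]|].
      - destruct Hne as [E HE]. exists E; left; auto.
      - intros E [H|[s [_ H]]]; auto. destruct (proj2_sig s) as [[_ [HD' _]] _]; auto.
      - assert (Hin : forall (s : T) E, C' E -> proj1_sig s E).
        { intros s E H. destruct (proj2_sig s) as [_ Hs]. auto. }
        intros E F [H1|[s1 [HA1 H1]]] [H2|[s2 [HA2 H2]]].
        + left; auto.
        + right; exists s2; split; auto. destruct (proj2_sig s2) as [[_ [_ [HI' _]]] _]. auto.
        + right; exists s1; split; auto. destruct (proj2_sig s1) as [[_ [_ [HI' _]]] _]. auto.
        + destruct (HA s1 s2 HA1 HA2) as [H|H]; apply HR in H.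
          * right; exists s2; split; auto. destruct (proj2_sig s2) as [[_ [_ [HI' _]]] _]. auto.
          * right; exists s1; split; auto. destruct (proj2_sig s1) as [[_ [_ [HI' _]]] _]. auto.
      - intros E F [H|[s [HAs H]]] HDF Hs.
        + left; eauto.
        + right; exists s; split; auto. destruct (proj2_sig s) as [[_ [_ [_ HS']]] _]. eauto.
      - intros E H; left; auto. }
    exists (exist _ U HU). intros s Hs. apply HR. simpl. intros E H. right; eauto.
  - exists (proj1_sig t). destruct (proj2_sig t) as [Hf Hinc]. split; [split|]; auto.
    intros N HN Hsub.
    assert (HN' : is_filter v N /\ fam_incl C' N).
    { split; auto. intros E H. apply Hsub, Hinc; auto. }
    specialize (Ht (exist _ N HN')). apply HR in Ht; [exact Ht|]. apply HR. exact Hsub.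
Qed.

Lemma partC C : maximal_in_star v C -> maximal_filter v C.
Proof.
  intros [Hst Hmax]. split; [apply Hst|].
  intros C' HC' Hinc.
  destruct (extend_max C' HC') as [M [HM HC'M]].
  assert (HMs := partA M HM).
  intros E HE. apply (Hmax M HMs).
  - intros E' H; auto.
  - auto.
Qed.

End Main.

Theorem mainTheorem10 (L : Cat) (HL : left_cancellative L) (v : Obj L) :
  (forall C, maximal_filter v C -> in_star v C) /\
  (forall S : ((Mor L -> Prop) -> Prop) -> Prop,
     (forall C, S C -> in_star v C) ->
     (forall C1 C2, S C1 -> S C2 -> fam_incl C1 C2 \/ fam_incl C2 C1) ->
     exists U, in_star v U /\ forall C, S C -> fam_incl C U) /\
  (forall C, maximal_in_star v C -> maximal_filter v C).
Proof.
  split; [|split].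
  - apply partA; auto.
  - apply partB; auto.
  - apply partC; auto.
Qed.
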